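(* Let $A$ and $B$ be finite-dimensional quantum systems, $\mathcal A$ a channel on $A$ with Kraus decomposition $\{A_i\}_{i=1}^{r_A}$ and $\mathcal B$ a channel on $B$ with Kraus decomposition $\{B_j\}_{j=1}^{r_B}$. Let $v\ge1$ and let $\{\alpha_{ik}\}_{i\le r_A,k\le v}$ and $\{\beta_{jk}\}_{j\le r_B,k\le v}$ be complex numbers with $\sum_{i,k}|\alpha_{ik}|^2=\sum_{j,k}|\beta_{jk}|^2=1$. Then there exist a $v$-dimensional vacuum sector $\mathrm{Vac}$ with orthonormal basis $\{|\upsilon_k\rangle\}_{k=1}^v$, a unit vector $|\upsilon_0\rangle\in\mathcal H_{\mathrm{Vac}}$, and vacuum extensions $\widetilde{\mathcal A}$ of $\mathcal A$ and $\widetilde{\mathcal B}$ of $\mathcal B$ with vacuum sector $\mathrm{Vac}$, such that the channel on $A\oplus B$ with Kraus operators $S_{ijk}:=A_i\beta_{jk}\oplus B_j\alpha_{ik}$ equals the superposition $\mathcal S=\mathcal T\circ(\widetilde{\mathcal A}\otimes\widetilde{\mathcal B})\circ\mathcal V$ of $\mathcal A$ and $\mathcal B$ specified by $\widetilde{\mathcal A},\widetilde{\mathcal B}$, the embedding $V$ (with vacuum vector $|\upsilon_0\rangle$) and a vacuum-discarding map $\mathcal T$.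
   Context: Let $\mathrm{Vac}$ be a sector (Hilbert space $\mathcal H_{\mathrm{Vac}}$ of dimension $v$) orthogonal to $A$ and to $B$, common to both. A vacuum extension of a channel $\mathcal C$ on $A$ is a channel $\widetilde{\mathcal C}$ on $\widetilde A=A\oplus\mathrm{Vac}$ such that (i) $\operatorname{Tr}[P_X\widetilde{\mathcal C}(\rho)]=1$ for every state $\rho$ supported in sector $X$, for $X=A$ and $X=\mathrm{Vac}$ (No Leakage), and (ii) its restriction to $A$ (the channel with Kraus operators $P_A\widetilde C_iP_A$) is $\mathcal C$. Let $\widetilde B=B\oplus\mathrm{Vac}$. The embedding $V:\mathcal H_A\oplus\mathcal H_B\to\mathcal H_{\widetilde A}\otimes\mathcal H_{\widetilde B}$ is $V(|\alpha\rangle\oplus|\beta\rangle)=|\alpha\rangle\otimes|\upsilon_0\rangle\oplus|\upsilon_0\rangle\otimes|\beta\rangle$ and $\mathcal V(\cdot)=V\cdot V^\dagger$. A vacuum-discarding map is $\mathcal T(\rho)=\sum_k T_k\rho T_k^\dagger+(1-\operatorname{Tr}[P_{\mathrm{succ}}\rho])|\psi_0\rangle\langle\psi_0|$, with $T_k=P_A\otimes\langle\upsilon_k|\oplus\langle\upsilon_k|\otimes P_B$, $P_{\mathrm{succ}}=P_A\otimes P_{\mathrm{Vac}}+P_{\mathrm{Vac}}\otimes P_B$, and $|\psi_0\rangle$ a fixed unit vector in $\mathcal H_A\oplus\mathcal H_B$. *)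

(* Defs.v *)
(* Complex scalars: an arbitrary numClosedFieldType C
   (the field of complex numbers is one). *)
From HB Require Import structures.
From mathcomp Require Export mxtens.
From mathcomp Require Import all_boot all_order all_algebra.
Set Implicit Arguments. Unset Strict Implicit. Unset Printing Implicit Defensive.
Import Order.TTheory GRing.Theory Num.Theory.
Local Open Scope ring_scope.

Section QDefs.
Variable C : numClosedFieldType.

Definition adj m n (M : 'M[C]_(m, n)) : 'M[C]_(n, m) := (map_mx Num.conj M)^T.

Definition psd n (rho : 'M[C]_n) : Prop :=
  forall x : 'cV[C]_n, 0 <= (adj x *m rho *m x) 0 0.
Definition density n (rho : 'M[C]_n) : Prop := psd rho /\ \tr rho = 1.

Definition kraus_apply (I : finType) m n (K : I -> 'M[C]_(m, n)) (rho : 'M[C]_n)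
  : 'M[C]_m := \sum_(i : I) K i *m rho *m adj (K i).

Definition is_channel (I : finType) n (K : I -> 'M[C]_n) : Prop :=
  \sum_(i : I) adj (K i) *m K i = 1%:M.

Definition same_channel (I J : finType) n (K : I -> 'M[C]_n) (L : J -> 'M[C]_n)
  : Prop := forall rho : 'M[C]_n, density rho -> kraus_apply K rho = kraus_apply L rho.

(* Sector A = first d coordinates, sector Vac = last v coordinates of A (+) Vac *)
Definition projA d v : 'M[C]_(d + v) := block_mx 1%:M 0 0 0.
Definition projV d v : 'M[C]_(d + v) := block_mx 0 0 0 1%:M.

Definition vacuum_extension (I J : finType) d v
  (K : I -> 'M[C]_d) (Kt : J -> 'M[C]_(d + v)) : Prop :=
  [/\ is_channel Kt,
      (forall rho : 'M[C]_(d + v), density rho -> projA d v *m rho *m projA d v = rho ->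
         \tr (projA d v *m kraus_apply Kt rho) = 1),
      (forall rho : 'M[C]_(d + v), density rho -> projV d v *m rho *m projV d v = rho ->
         \tr (projV d v *m kraus_apply Kt rho) = 1) &
      (* restriction to A (Kraus operators P_A Kt_j P_A, as operators on H_A) is K *)
      same_channel (fun j => ulsubmx (Kt j)) K].

Definition tens_kraus (I J : finType) m n p q
  (K : I -> 'M[C]_(m, n)) (L : J -> 'M[C]_(p, q)) (ij : I * J) : 'M[C]_(m * p, n * q) :=
  K ij.1 *t L ij.2.

Definition castc n k (M : 'M[C]_(n * 1, k)) : 'M[C]_(n, k) := castmx (muln1 n, erefl) M.
Definition castr k m (M : 'M[C]_(k, m * 1)) : 'M[C]_(k, m) := castmx (erefl, muln1 m) M.
Definition castc' n k (M : 'M[C]_(1 * n, k)) : 'M[C]_(n, k) := castmx (mul1n n, erefl) M.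
Definition castr' k m (M : 'M[C]_(k, 1 * m)) : 'M[C]_(k, m) := castmx (erefl, mul1n m) M.

(* embedding V : H_A (+) H_B -> H_{A~} (x) H_{B~},
   V(a (+) b) = a (x) u0 (+) u0 (x) b *)
Definition embedV dA dB v (u0 : 'cV[C]_v) : 'M[C]_((dA + v) * (dB + v), dA + dB) :=
  row_mx (castr ((col_mx 1%:M 0 : 'M[C]_(dA + v, dA)) *t (col_mx 0 u0 : 'cV[C]_(dB + v))))
         (castr' ((col_mx 0 u0 : 'cV[C]_(dA + v)) *t (col_mx 1%:M 0 : 'M[C]_(dB + v, dB)))).

(* T_k = P_A (x) <u_k| (+) <u_k| (x) P_B *)
Definition discT dA dB v (u : 'I_v -> 'cV[C]_v) (k : 'I_v)
  : 'M[C]_(dA + dB, (dA + v) * (dB + v)) :=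
  col_mx (castc ((row_mx 1%:M 0 : 'M[C]_(dA, dA + v)) *t (row_mx 0 (adj (u k)) : 'rV[C]_(dB + v))))
         (castc' ((row_mx 0 (adj (u k)) : 'rV[C]_(dA + v)) *t (row_mx 1%:M 0 : 'M[C]_(dB, dB + v)))).

Definition Psucc dA dB v : 'M[C]_((dA + v) * (dB + v)) :=
  projA dA v *t projV dB v + projV dA v *t projA dB v.

Definition vac_discard dA dB v (u : 'I_v -> 'cV[C]_v) (psi0 : 'cV[C]_(dA + dB))
  (rho : 'M[C]_((dA + v) * (dB + v))) : 'M[C]_(dA + dB) :=
  kraus_apply (discT dA dB u) rho
  + (1 - \tr (Psucc dA dB v *m rho)) *: (psi0 *m adj psi0).

Definition superposition (I J : finType) dA dB v
  (At : I -> 'M[C]_(dA + v)) (Bt : J -> 'M[C]_(dB + v))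
  (u0 : 'cV[C]_v) (u : 'I_v -> 'cV[C]_v) (psi0 : 'cV[C]_(dA + dB))
  (rho : 'M[C]_(dA + dB)) : 'M[C]_(dA + dB) :=
  vac_discard u psi0
    (kraus_apply (tens_kraus At Bt)
       (embedV dA dB u0 *m rho *m adj (embedV dA dB u0))).

Definition Skraus rA rB dA dB v (A : 'I_rA -> 'M[C]_dA) (B : 'I_rB -> 'M[C]_dB)
  (alpha : 'I_rA -> 'I_v -> C) (beta : 'I_rB -> 'I_v -> C)
  (ijk : 'I_rA * 'I_rB * 'I_v) : 'M[C]_(dA + dB) :=
  let: (i, j, k) := ijk in block_mx (beta j k *: A i) 0 0 (alpha i k *: B j).

End QDefs.

(* Main.v *)
Require Import Defs.
From HB Require Import structures.
From mathcomp Require Import all_boot all_order all_algebra.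
Import Order.TTheory GRing.Theory Num.Theory.
Local Open Scope ring_scope.
Set Implicit Arguments. Unset Strict Implicit. Unset Printing Implicit Defensive.

Section Helpers.
Variable C : numClosedFieldType.

Lemma adjM m n p (A : 'M[C]_(m, n)) (B : 'M[C]_(n, p)) :
  adj (A *m B) = adj B *m adj A.
Proof. by rewrite /adj map_mxM trmx_mul. Qed.

Lemma adjK m n (A : 'M[C]_(m, n)) : adj (adj A) = A.
Proof.
by apply/matrixP => i j; rewrite /adj !mxE conjCK.
Qed.

Lemma adjZ m n (a : C) (A : 'M[C]_(m, n)) : adj (a *: A) = a^* *: adj A.
Proof. by rewrite /adj map_mxZ linearZ. Qed.

Lemma adjD m n (A B : 'M[C]_(m, n)) : adj (A + B) = adj A + adj B.
Proof. by apply/matrixP => i j; rewrite /adj !mxE rmorphD. Qed.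

Lemma adjN m n (A : 'M[C]_(m, n)) : adj (- A) = - adj A.
Proof. by apply/matrixP => i j; rewrite /adj !mxE rmorphN. Qed.

Lemma adj0 m n : adj (0 : 'M[C]_(m, n)) = 0.
Proof. by apply/matrixP => i j; rewrite /adj !mxE rmorph0. Qed.

Lemma adj1 n : adj (1%:M : 'M[C]_n) = 1%:M.
Proof. by apply/matrixP => i j; rewrite /adj !mxE rmorph_nat eq_sym. Qed.

Lemma adj_sum (I : finType) m n (F : I -> 'M[C]_(m, n)) :
  adj (\sum_i F i) = \sum_i adj (F i).
Proof. by apply/matrixP => i j; rewrite /adj !mxE !summxE rmorph_sum; apply: eq_bigr => k _; rewrite !mxE. Qed.

Lemma adj_block m1 m2 n1 n2 (a : 'M[C]_(m1, n1)) (b : 'M[C]_(m1, n2)) (c : 'M[C]_(m2, n1)) (d : 'M[C]_(m2, n2)) :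
  adj (block_mx a b c d) = block_mx (adj a) (adj c) (adj b) (adj d).
Proof. by rewrite /adj map_block_mx tr_block_mx. Qed.

Lemma adj_row m n1 n2 (a : 'M[C]_(m, n1)) (b : 'M[C]_(m, n2)) :
  adj (row_mx a b) = col_mx (adj a) (adj b).
Proof. by rewrite /adj map_row_mx tr_row_mx. Qed.

Lemma adj_col m1 m2 n (a : 'M[C]_(m1, n)) (b : 'M[C]_(m2, n)) :
  adj (col_mx a b) = row_mx (adj a) (adj b).
Proof. by rewrite /adj map_col_mx tr_col_mx. Qed.

Lemma adj_cast m n m' n' (e : (m = m') * (n = n')) (A : 'M[C]_(m, n)) :
  adj (castmx e A) = castmx (e.2, e.1) (adj A).
Proof. by rewrite /adj map_castmx trmx_cast. Qed.

Lemma adj_tens m n p q (A : 'M[C]_(m, n)) (B : 'M[C]_(p, q)) :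
  adj (A *t B) = adj A *t adj B.
Proof. by rewrite /adj map_mxT trmx_tens. Qed.

Lemma castmx_irr m n (e : (m = m) * (n = n)) (A : 'M[C]_(m, n)) : castmx e A = A.
Proof. by rewrite castmx_id. Qed.

Lemma tens_sumr (I : finType) m n p q (A : 'M[C]_(m, n)) (F : I -> 'M[C]_(p, q)) :
  A *t (\sum_i F i) = \sum_i (A *t F i).
Proof.
apply/matrixP => i j; rewrite !mxE !summxE mulr_sumr; apply: eq_bigr => k _.
by rewrite !mxE.
Qed.

Lemma sum_block (I : finType) m1 m2 n1 n2 (F : I -> 'M[C]_(m1, n1))
   (G : I -> 'M[C]_(m2, n2)) :
  \sum_i block_mx (F i) 0 0 (G i) = block_mx (\sum_i F i) 0 0 (\sum_i G i).
Proof.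
apply: (big_rec3 (fun a b c => a = block_mx b 0 0 c)).
  by rewrite block_mx0.
by move=> i a b c _ ->; rewrite add_block_mx !addr0.
Qed.


Lemma castML m m' n p (e : m = m') (A : 'M[C]_(m, n)) (B : 'M[C]_(n, p)) :
  castmx (e, erefl) A *m B = castmx (e, erefl) (A *m B).
Proof. by case: m' / e. Qed.

Lemma castMR m n p p' (e : p = p') (A : 'M[C]_(m, n)) (B : 'M[C]_(n, p)) :
  A *m castmx (erefl, e) B = castmx (erefl, e) (A *m B).
Proof. by case: p' / e. Qed.

Lemma castmx0 m n m' n' (e : (m = m') * (n = n')) : castmx e (0 : 'M[C]_(m, n)) = 0.
Proof. by case: e => e1 e2; case: m' / e1; case: n' / e2. Qed.

Lemma key dA dB v (u : 'I_v -> 'cV[C]_v) (u0 : 'cV[C]_v) (m : 'I_v)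
  (P : 'M[C]_dA) (Q : 'M[C]_v) (R : 'M[C]_dB) (S : 'M[C]_v) :
  discT dA dB u m *m (block_mx P 0 0 Q *t block_mx R 0 0 S) *m embedV dA dB u0
  = block_mx ((adj (u m) *m S *m u0) 0 0 *: P) 0 0
             ((adj (u m) *m Q *m u0) 0 0 *: R).
Proof.
rewrite /discT /embedV /castc /castc' /castr /castr'.
rewrite mul_col_mx !mul_mx_row !mul_col_mx !castML !castMR !tensmx_mul.
rewrite !mul_row_block !mul_row_col !mul1mx !mul0mx !mulmx0 !addr0 !add0r.
rewrite ?mul_mx_row ?mul_col_mx ?mul0mx ?mulmx0.
rewrite !tens0mx !castmx0 !mulmx1 [adj (u m) *m S *m u0]mx11_scalar [adj (u m) *m Q *m u0]mx11_scalar tens_mx_scalar tens_scalar_mx !castmx_comp !castmx_irr !mxE block_mxEh.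
by rewrite eqxx !mulr1n.
Qed.


Lemma castMM m n n' p (e : n = n') (A : 'M[C]_(m, n)) (B : 'M[C]_(n, p)) :
  castmx (erefl, e) A *m castmx (e, erefl) B = A *m B.
Proof. by case: n' / e. Qed.

Lemma tens_suml (I : finType) m n p q (F : I -> 'M[C]_(m, n)) (B : 'M[C]_(p, q)) :
  (\sum_i F i) *t B = \sum_i (F i *t B).
Proof.
apply/matrixP => i j; rewrite !mxE !summxE mulr_suml; apply: eq_bigr => k _.
by rewrite !mxE.
Qed.

Lemma psucc_sum dA dB v (u : 'I_v -> 'cV[C]_v) :
  \sum_m u m *m adj (u m) = 1%:M ->
  Psucc C dA dB v = \sum_m adj (discT dA dB u m) *m discT dA dB u m.
Proof.
move=> hu.
rewrite /discT /castc /castc'.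
under eq_bigr => m _ do rewrite adj_col mul_row_col !adj_cast /= !castMM !adj_tens !tensmx_mul !adj_row !adj0 !adj1 !adjK !mul_col_row !mul1mx !mul0mx !mulmx0.
rewrite big_split /= -tens_sumr -tens_suml.
have -> : \sum_(i < v) block_mx (0 : 'M[C]_(dA, dA)) 0 0 (u i *m adj (u i)) = projV C dA v.
  by rewrite sum_block big1 // hu.
have -> : \sum_(i < v) block_mx (0 : 'M[C]_(dB, dB)) 0 0 (u i *m adj (u i)) = projV C dB v.
  by rewrite sum_block big1 // hu.
by [].
Qed.


Lemma splitl m n (i : 'I_m) : split (lshift n i) = inl i.
Proof. exact: (unsplitK (inl i)). Qed.
Lemma splitr m n (i : 'I_n) : split (rshift m i) = inr i.
Proof. exact: (unsplitK (inr i)). Qed.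

Definition colv v (a : 'I_v -> C) : 'cV[C]_v := \col_r a r.
Definition Vvac v (a : 'I_v -> C) (u0 : 'cV[C]_v) : 'M[C]_v := colv a *m adj u0.
Definition Wvac v (u0 : 'cV[C]_v) : 'M[C]_v := 1%:M - u0 *m adj u0.
Definition extP d r (K : 'I_r -> 'M[C]_d) (x : 'I_(r + 1)) : 'M[C]_d :=
  match split x with inl i => K i | inr _ => 0 end.
Definition extQ r v (a : 'I_r -> 'I_v -> C) (u0 : 'cV[C]_v) (x : 'I_(r + 1)) : 'M[C]_v :=
  match split x with inl i => Vvac (a i) u0 | inr _ => Wvac u0 end.
Definition ext d r v (K : 'I_r -> 'M[C]_d) (a : 'I_r -> 'I_v -> C) (u0 : 'cV[C]_v)
  (x : 'I_(r + 1)) : 'M[C]_(d + v) := block_mx (extP K x) 0 0 (extQ a u0 x).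

Lemma kraus_comp (I J : finType) n p q (K : I -> 'M[C]_(n, p)) (L : J -> 'M[C]_(p, p))
  (W : 'M[C]_(p, q)) (rho : 'M[C]_q) :
  kraus_apply K (kraus_apply L (W *m rho *m adj W)) =
  \sum_i \sum_j (K i *m L j *m W) *m rho *m adj (K i *m L j *m W).
Proof.
rewrite /kraus_apply; apply: eq_bigr => i _.
rewrite mulmx_sumr mulmx_suml; apply: eq_bigr => j _.
by rewrite !adjM !mulmxA.
Qed.

Lemma Wu0 v (u0 : 'cV[C]_v) : adj u0 *m u0 = 1%:M -> Wvac u0 *m u0 = 0.
Proof. by move=> h; rewrite /Wvac mulmxBl mul1mx -mulmxA h mulmx1 subrr. Qed.

Lemma coefV v (a : 'I_v -> C) (u0 : 'cV[C]_v) m : adj u0 *m u0 = 1%:M ->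
  (adj (delta_mx m 0 : 'cV[C]_v) *m Vvac a u0 *m u0) 0 0 = a m.
Proof.
move=> h; rewrite /Vvac -!mulmxA h mulmx1 !mxE.
rewrite (bigD1 m) //= big1 ?addr0; last first.
  by move=> k /negbTE hk; rewrite !mxE eqxx hk /= conjC0 mul0r.
by rewrite !mxE !eqxx /= conjC1 mul1r.
Qed.

Lemma main_eq dA dB rA rB v (A : 'I_rA -> 'M[C]_dA) (B : 'I_rB -> 'M[C]_dB)
  (alpha : 'I_rA -> 'I_v -> C) (beta : 'I_rB -> 'I_v -> C) (u0 : 'cV[C]_v)
  (rho : 'M[C]_(dA + dB)) :
  adj u0 *m u0 = 1%:M ->
  kraus_apply (Skraus A B alpha beta) rho =
  kraus_apply (discT dA dB (fun m => delta_mx m 0))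
    (kraus_apply (tens_kraus (ext A alpha u0) (ext B beta u0))
       (embedV dA dB u0 *m rho *m adj (embedV dA dB u0))).
Proof.
move=> hu.
rewrite kraus_comp.
pose u := fun m : 'I_v => (delta_mx m 0 : 'cV[C]_v).
pose M := fun m a b => block_mx ((adj (u m) *m extQ beta u0 b *m u0) 0 0 *: extP A a) 0 0
      ((adj (u m) *m extQ alpha u0 a *m u0) 0 0 *: extP B b).
pose G := fun m a b => M m a b *m rho *m adj (M m a b).
rewrite (eq_bigr (fun m => \sum_a \sum_b G m a b)); last first.
  move=> m _; rewrite pair_bigA; apply: eq_bigr => -[a b] _.
  by rewrite /tens_kraus /ext /= key.
have GlA : forall m e b, G m (rshift rA e) b = 0.
  move=> m e b; rewrite /G /M /extP /extQ splitr /= -(mulmxA _ (Wvac u0)) Wu0 // mulmx0.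
  rewrite (_ : (0 : 'M[C]_(1,1)) 0 0 = 0); last by rewrite mxE.
  by rewrite scale0r scaler0 block_mx0 !mul0mx.
have GlB : forall m a e, G m a (rshift rB e) = 0.
  move=> m a e; rewrite /G /M /extP /extQ splitr /= -(mulmxA _ (Wvac u0)) Wu0 // mulmx0.
  rewrite (_ : (0 : 'M[C]_(1,1)) 0 0 = 0); last by rewrite mxE.
  by rewrite scale0r scaler0 block_mx0 !mul0mx.
have HG : forall m, \sum_a \sum_b G m a b = \sum_i \sum_j G m (lshift 1 i) (lshift 1 j).
  move=> m; rewrite big_split_ord /=.
  have -> : \sum_(e < 1) \sum_b G m (rshift rA e) b = 0.
    by apply: big1 => e _; apply: big1 => b _; apply: GlA.
  rewrite addr0; apply: eq_bigr => i _; rewrite big_split_ord /=.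
  have -> : \sum_(e < 1) G m (lshift 1 i) (rshift rB e) = 0.
    by apply: big1 => e _; apply: GlB.
  by rewrite addr0.
under eq_bigr => m _ do rewrite HG.
rewrite /kraus_apply.
pose F := fun i j k => Skraus A B alpha beta (i, j, k) *m rho *m adj (Skraus A B alpha beta (i, j, k)).
transitivity (\sum_i \sum_j \sum_k F i j k).
  rewrite pair_bigA /= pair_bigA /=. by apply: eq_bigr => -[[i j] k].
symmetry; rewrite exchange_big; apply: eq_bigr => i _.
rewrite exchange_big; apply: eq_bigr => j _; apply: eq_bigr => k _.
rewrite /F /G /M /extP /extQ !splitl /= /u !coefV //.
Qed.


Lemma tr_sum (I : finType) n (F : I -> 'M[C]_n) : \tr (\sum_i F i) = \sum_i \tr (F i).
Proof. exact: (big_morph _ (@mxtraceD _ _) (mxtrace0 _ _)). Qed.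

Lemma tr_kraus (I : finType) n (K : I -> 'M[C]_n) (rho : 'M[C]_n) :
  is_channel K -> \tr (kraus_apply K rho) = \tr rho.
Proof.
move=> hK; rewrite /kraus_apply tr_sum.
under eq_bigr => i _ do rewrite mxtrace_mulC mulmxA.
by rewrite -tr_sum -mulmx_suml hK mul1mx.
Qed.

Lemma tr_psucc (I : finType) n p (T : I -> 'M[C]_(n, p)) (P Y : 'M[C]_p) :
  P = \sum_i adj (T i) *m T i -> \tr (P *m Y) = \tr (kraus_apply T Y).
Proof.
move=> ->; rewrite mulmx_suml /kraus_apply !tr_sum; apply: eq_bigr => i _.
by rewrite -mulmxA mxtrace_mulC.
Qed.

Lemma Skraus_channel dA dB rA rB v (A : 'I_rA -> 'M[C]_dA) (B : 'I_rB -> 'M[C]_dB)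
  (alpha : 'I_rA -> 'I_v -> C) (beta : 'I_rB -> 'I_v -> C) :
  is_channel A -> is_channel B ->
  \sum_(i < rA) \sum_(k < v) `|alpha i k| ^+ 2 = 1 ->
  \sum_(j < rB) \sum_(k < v) `|beta j k| ^+ 2 = 1 ->
  is_channel (Skraus A B alpha beta).
Proof.
move=> hA hB ha hb; rewrite /is_channel.
pose F := fun i j k => adj (Skraus A B alpha beta (i, j, k)) *m Skraus A B alpha beta (i, j, k).
transitivity (\sum_i \sum_j \sum_k F i j k).
  rewrite pair_bigA /= pair_bigA /=. by apply: eq_bigr => -[[i j] k].
rewrite /F /=.
under eq_bigr => i _ do under eq_bigr => j _ do under eq_bigr => k _ do
  rewrite adj_block !adj0 !adjZ mulmx_block !mulmx0 !mul0mx !addr0 !add0r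
     -!scalemxAl -!scalemxAr !scalerA -!normCKC.
under eq_bigr => i _ do under eq_bigr => j _ do rewrite sum_block.
under eq_bigr => i _ do rewrite sum_block.
rewrite sum_block [RHS]scalar_mx_block; congr block_mx.
  rewrite -hA; apply: eq_bigr => i _.
  under eq_bigr => j _ do rewrite -scaler_suml.
  by rewrite -scaler_suml hb scale1r.
rewrite -hB exchange_big; apply: eq_bigr => j _.
under eq_bigr => i _ do rewrite -scaler_suml.
by rewrite -scaler_suml ha scale1r.
Qed.


Lemma noleak (I : finType) n (K : I -> 'M[C]_n) (P rho : 'M[C]_n) :
  is_channel K -> (forall i, P *m K i = K i *m P) -> P *m P = P ->
  density rho -> P *m rho *m P = rho -> \tr (P *m kraus_apply K rho) = 1.
Proof.
move=> hK hc hP [_ htr] hr.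
have hPr : P *m rho = rho by rewrite -{1}hr !mulmxA hP.
suff -> : P *m kraus_apply K rho = kraus_apply K rho by rewrite tr_kraus.
rewrite /kraus_apply mulmx_sumr; apply: eq_bigr => i _.
by rewrite !mulmxA hc -(mulmxA (K i)) hPr.
Qed.

Lemma colvK v (a : 'I_v -> C) : adj (colv a) *m colv a = (\sum_k `|a k| ^+ 2)%:M.
Proof.
apply/matrixP => i j; rewrite !ord1 !mxE eqxx mulr1n; apply: eq_bigr => k _.
by rewrite !mxE normCKC.
Qed.

Lemma ext_vac d r v (K : 'I_r -> 'M[C]_d) (a : 'I_r -> 'I_v -> C) (u0 : 'cV[C]_v) :
  is_channel K -> \sum_(i < r) \sum_(k < v) `|a i k| ^+ 2 = 1 -> adj u0 *m u0 = 1%:M ->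
  vacuum_extension K (ext K a u0).
Proof.
move=> hK ha hu.
have hPP : u0 *m adj u0 *m (u0 *m adj u0) = u0 *m adj u0.
  by rewrite mulmxA -(mulmxA u0) hu mulmx1.
have hW : adj (Wvac u0) *m Wvac u0 = Wvac u0.
  rewrite /Wvac adjD adjN adj1 adjM adjK mulmxBl !mulmxBr !mul1mx !mulmx1 hPP.
  by rewrite subrr subr0.
have hV : forall i, adj (Vvac (a i) u0) *m Vvac (a i) u0
    = (\sum_k `|a i k| ^+ 2) *: (u0 *m adj u0).
  move=> i; rewrite /Vvac adjM adjK !mulmxA -(mulmxA u0) colvK.
  by rewrite mul_mx_scalar -scalemxAl.
have hch : is_channel (ext K a u0).
  rewrite /is_channel /ext.
  under eq_bigr => x _ do rewrite adj_block !adj0 mulmx_block !mulmx0 !mul0mx !addr0 !add0r.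
  rewrite sum_block [RHS]scalar_mx_block; congr block_mx.
    rewrite big_split_ord /= [X in _ + X]big1 ?addr0.
      by rewrite -hK; apply: eq_bigr => i _; rewrite /extP splitl.
    by move=> e _; rewrite /extP splitr /= mulmx0.
  rewrite big_split_ord /= big_ord1 /extQ splitr /= hW.
  under eq_bigr => i _ do rewrite splitl /= hV.
  by rewrite -scaler_suml ha scale1r /Wvac addrC subrK.
have hcomm : forall (X : 'M[C]_d) (Y : 'M[C]_v),
   (forall P : 'M[C]_(d + v), P = projA C d v \/ P = projV C d v ->
     P *m block_mx X 0 0 Y = block_mx X 0 0 Y *m P).
  move=> X Y P [->|->]; rewrite /projA /projV !mulmx_block !mulmx0 !mul0mx !mulmx1 !mul1mx; by rewrite ?addr0 ?add0r.
split => //.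
- move=> rho hr hrr; apply: noleak => //.
    by move=> x; rewrite /ext hcomm //; left.
  by rewrite /projA mulmx_block !mulmx0 !mul0mx !mulmx1 !addr0.
- move=> rho hr hrr; apply: noleak => //.
    by move=> x; rewrite /ext hcomm //; right.
  by rewrite /projV mulmx_block !mulmx0 !mul0mx !mulmx1 !addr0 !add0r.
- move=> rho _; rewrite /kraus_apply big_split_ord /= [X in _ + X]big1 ?addr0.
    by apply: eq_bigr => i _; rewrite /ext block_mxKul /extP splitl.
  by move=> e _; rewrite /ext block_mxKul /extP splitr /= !mul0mx.
Qed.


Lemma adj_delta m n (i : 'I_m) (j : 'I_n) : adj (delta_mx i j : 'M[C]_(m, n)) = delta_mx j i.
Proof. by apply/matrixP => x y; rewrite /adj !mxE conjC_nat andbC. Qed.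

Lemma delta11 : (delta_mx 0 0 : 'M[C]_1) = 1%:M.
Proof. by apply/matrixP => x y; rewrite !ord1 !mxE. Qed.

Lemma sum_delta v : \sum_(m < v) (delta_mx m 0 : 'cV[C]_v) *m adj (delta_mx m 0) = 1%:M.
Proof.
apply/matrixP => i j; rewrite summxE.
under eq_bigr => m _ do rewrite adj_delta mul_delta_mx mxE.
rewrite (bigD1 i) //= big1 ?addr0; last first.
  by move=> m /negbTE hm; rewrite eq_sym hm.
by rewrite !mxE eqxx [j == i]eq_sym.
Qed.

End Helpers.

Theorem proposition2 (C : numClosedFieldType) (dA dB rA rB v : nat)
  (A : 'I_rA -> 'M[C]_dA) (B : 'I_rB -> 'M[C]_dB)
  (alpha : 'I_rA -> 'I_v -> C) (beta : 'I_rB -> 'I_v -> C) :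
  (0 < dA)%N -> (0 < dB)%N -> (1 <= v)%N ->
  is_channel A -> is_channel B ->
  \sum_(i < rA) \sum_(k < v) `|alpha i k| ^+ 2 = 1 ->
  \sum_(j < rB) \sum_(k < v) `|beta j k| ^+ 2 = 1 ->
  exists (u : 'I_v -> 'cV[C]_v) (u0 : 'cV[C]_v) (psi0 : 'cV[C]_(dA + dB))
         (nA nB : nat) (At : 'I_nA -> 'M[C]_(dA + v)) (Bt : 'I_nB -> 'M[C]_(dB + v)),
    [/\ (forall k l : 'I_v, adj (u k) *m u l = (k == l)%:R%:M)
        /\ adj u0 *m u0 = 1%:M,
        adj psi0 *m psi0 = 1%:M,
        vacuum_extension A At,
        vacuum_extension B Bt &
        forall rho : 'M[C]_(dA + dB), density rho ->
          kraus_apply (Skraus A B alpha beta) rho = superposition At Bt u0 u psi0 rho].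
Proof.
move=> hdA hdB hv hA hB ha hb.
have horth : forall k l : 'I_v, adj (delta_mx k 0 : 'cV[C]_v) *m delta_mx l 0 = (k == l)%:R%:M.
  move=> k l; rewrite adj_delta mul_delta_mx_cond delta11.
  case: (k == l) => /=; rewrite ?mulr1n ?mulr1n ?mulr0n ?mulr0n //; by apply/matrixP => x y; rewrite !mxE ?mul0rn.
have hu0 : adj (delta_mx (Ordinal hv) 0 : 'cV[C]_v) *m delta_mx (Ordinal hv) 0 = 1%:M.
  by rewrite horth eqxx.
exists (fun m => delta_mx m 0), (delta_mx (Ordinal hv) 0),
  (delta_mx (lshift dB (Ordinal hdA)) 0), (rA + 1)%N, (rB + 1)%N,
  (ext A alpha (delta_mx (Ordinal hv) 0)), (ext B beta (delta_mx (Ordinal hv) 0)).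
split.
- by split.
- by rewrite adj_delta mul_delta_mx delta11.
- exact: ext_vac.
- exact: ext_vac.
move=> rho hr.
rewrite /superposition /vac_discard -main_eq //.
rewrite (tr_psucc _ (psucc_sum dA dB (sum_delta C v))) -main_eq //.
rewrite tr_kraus; last exact: Skraus_channel.
by case: hr => _ ->; rewrite subrr scale0r addr0.
Qed.
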